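(* Let $L$ be a finite language over a $k$-letter alphabet accepted by a layered NFA of width $\omega$ and length $n$ with $f$ final states. Then $L$ can be described by a regular expression of length $\mathrm{rpn}(L) \leq O\big( f k n \omega \cdot \omega^{\log n} \big)$.
   Context: An NFA for a finite language is layered if its set of states admits a partition $Q_0\cup Q_1\cup\dots\cup Q_n$ such that every word of length $j$ leads (from the initial state) only to states in $Q_j$; $Q_j$ is the $j$-th layer. Its width is $\omega=\max_{0\le j\le n}|Q_j|$ and its length is the length $n$ of its longest path. Regular expressions are built from $\epsilon$ and letters by union and concatenation; $\mathrm{rpn}(R)$ is the number of nodes in the syntax tree of $R$, and $\mathrm{rpn}(L)$ is the minimum over expressions describing $L$. Logarithms are base 2; the constant in $O(\cdot)$ is absolute. *)

(* Defs.v *)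
From mathcomp Require Import all_boot.
From Stdlib Require Import Reals.

Set Implicit Arguments.
Unset Strict Implicit.
Unset Printing Implicit Defensive.

Fixpoint runs (k : nat) (Q : finType) (delta : Q -> 'I_k -> Q -> bool)
    (p : Q) (w : seq 'I_k) (q : Q) : bool :=
  match w with
  | [::] => p == q
  | a :: w' => [exists r, delta p a r && runs delta r w' q]
  end.

Definition accepts (k : nat) (Q : finType) (delta : Q -> 'I_k -> Q -> bool)
    (q0 : Q) (F : {set Q}) (w : seq 'I_k) : bool :=
  [exists q in F, runs delta q0 w q].

Definition longest_path_length (k : nat) (Q : finType)
    (delta : Q -> 'I_k -> Q -> bool) (q0 : Q) (n : nat) : Prop :=
  (exists w q, size w = n /\ runs delta q0 w q) /\
  (forall w q, runs delta q0 w q -> size w <= n).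

(* lay : Q -> 'I_n.+1 is a partition Q_0 u ... u Q_n (Q_j = lay^-1 j)
   such that every word of length j leads from q0 only to states of Q_j *)
Definition layered_by (k : nat) (Q : finType) (delta : Q -> 'I_k -> Q -> bool)
    (q0 : Q) (n : nat) (lay : Q -> 'I_n.+1) : Prop :=
  forall w q, runs delta q0 w q -> nat_of_ord (lay q) = size w.

Definition width (Q : finType) (n : nat) (lay : Q -> 'I_n.+1) : nat :=
  \max_(j < n.+1) #|[set q | lay q == j]|.

Inductive regex (k : nat) : Type :=
  | REps : regex k
  | RLet : 'I_k -> regex k
  | RUnion : regex k -> regex k -> regex k
  | RCat : regex k -> regex k -> regex k.

Fixpoint matches (k : nat) (r : regex k) (w : seq 'I_k) : Prop :=
  match r with
  | REps => w = [::]
  | RLet a => w = [:: a]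
  | RUnion r1 r2 => matches r1 w \/ matches r2 w
  | RCat r1 r2 => exists u v, w = u ++ v /\ matches r1 u /\ matches r2 v
  end.

Fixpoint rpn (k : nat) (r : regex k) : nat :=
  match r with
  | REps => 1
  | RLet _ => 1
  | RUnion r1 r2 => (rpn r1 + rpn r2).+1
  | RCat r1 r2 => (rpn r1 + rpn r2).+1
  end.

Definition rpn_bound (f k n w : nat) : R :=
  (INR (f * k * n * w) * Rpower (INR w) (ln (INR n) / ln 2))%R.

(* Main.v *)
Require Import Defs.
From mathcomp Require Import all_boot.
From Stdlib Require Import Reals.
From mathcomp Require Import zify.
From Stdlib Require Import Lra.

Section Reg.
Variable k : nat.

Definition ounion (x y : option (regex k)) :=
  match x, y with
  | None, _ => y
  | _, None => x
  | Some a, Some b => Some (RUnion a b)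
  end.
Definition ocat (x y : option (regex k)) :=
  match x, y with
  | Some a, Some b => Some (RCat a b)
  | _, _ => None
  end.
Definition osize (x : option (regex k)) := if x is Some r then rpn r else 0.
Definition omatch (x : option (regex k)) w := if x is Some r then matches r w else False.

Lemma ounionP x y w : omatch (ounion x y) w <-> omatch x w \/ omatch y w.
Proof. case: x => [a|]; case: y => [b|] /=; tauto. Qed.
Lemma ounion_size x y : osize (ounion x y) <= osize x + osize y + 1.
Proof. case: x => [a|]; case: y => [b|] /=; lia. Qed.
Lemma ocatP x y w : omatch (ocat x y) w <-> exists u v, w = u ++ v /\ omatch x u /\ omatch y v.
Proof.
case: x => [a|]; case: y => [b|] /=; try tauto; split=> //;
  by case=> u [v] [_] [].
Qed.
Lemma ocat_size x y : osize (ocat x y) <= osize x + osize y + 1.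
Proof. case: x => [a|]; case: y => [b|] /=; lia. Qed.

Definition bigU {T : Type} (l : seq T) (g : T -> option (regex k)) :=
  foldr (fun s acc => ounion (g s) acc) None l.

Lemma bigUP (T : eqType) (l : seq T) g w :
  omatch (bigU l g) w <-> exists2 s, s \in l & omatch (g s) w.
Proof.
elim: l => [|a l IH] /=; first by split=> // [[]].
rewrite ounionP IH; split.
- case=> [h|[s hs h]]; first by exists a; rewrite ?mem_head.
  by exists s; rewrite // in_cons hs orbT.
- case=> s; rewrite in_cons => /orP [/eqP -> h|hs h]; first by left.
  by right; exists s.
Qed.

Lemma bigU_size {T : eqType} {l : seq T} {g : T -> option (regex k)} {M : nat} :
  (forall s, s \in l -> osize (g s) <= M) -> osize (bigU l g) <= size l * M.+1.
Proof.
elim: l => [|a l IH] //= H.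
have h1 := H a (mem_head _ _).
have h2 : osize (bigU l g) <= size l * M.+1.
  by apply: IH => s hs; apply: H; rewrite in_cons hs orbT.
have := ounion_size (g a) (bigU l g); rewrite mulSn; lia.
Qed.

Lemma bigU_None (T : eqType) (l : seq T) g w :
  bigU l g = None -> ~ omatch (bigU l g) w.
Proof. by move=> ->. Qed.

Variable Q : finType.
Variable delta : Q -> 'I_k -> Q -> bool.

Lemma runs_cat p u v q :
  runs delta p (u ++ v) q = [exists s, runs delta p u s && runs delta s v q].
Proof.
elim: u p => [|a u IH] p /=.
  apply/idP/existsP => [h|[s /andP [/eqP -> h]]] //; by exists p; rewrite eqxx.
apply/existsP/existsP => [[r /andP [hr]]|[s /andP [/existsP [r /andP [hr h1]] h2]]].
  rewrite IH => /existsP [s /andP [h1 h2]].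
  by exists s; rewrite h2 andbT; apply/existsP; exists r; rewrite hr h1.
by exists r; rewrite hr IH; apply/existsP; exists s; rewrite h1 h2.
Qed.

Variable q0 : Q.
Variable n : nat.
Variable lay : Q -> 'I_n.+1.
Hypothesis Hlay : layered_by delta q0 lay.

Fixpoint E (d l : nat) (p q : Q) : option (regex k) :=
  if l == 0 then (if p == q then Some (REps k) else None)
  else if l == 1 then bigU (enum [pred a | delta p a q]) (fun a => Some (RLet a))
  else match d with
       | 0 => None
       | d'.+1 => bigU (enum [pred s | val (lay s) == val (lay p) + l./2])
                    (fun s => ocat (E d' l./2 p s) (E d' (l - l./2) s q))
       end.

Lemma E_sound d l p q w : omatch (E d l p q) w -> size w = l /\ runs delta p w q.
Proof.
have base0 : forall p q w, omatch (if p == q then Some (REps k) else None) w ->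
   size w = 0 /\ runs delta p w q.
  move=> p1 q1 w1.
  simpl. case: (p1 =P q1) => [<-|] /=; last by []. move=> ->; by rewrite /= eqxx.
have base1 : forall p q w,
   omatch (bigU (enum [pred a | delta p a q]) (fun a => Some (RLet a))) w ->
   size w = 1 /\ runs delta p w q.
  move=> p1 q1 w1.
  move/bigUP=> [a]; rewrite mem_enum /= => ha ->; split; first by [].
  by apply/existsP; exists q1; rewrite eqxx andbT; exact: ha.
elim: d l p q w => [|d IH] l p q w /=.
  case: (l =P 0) => [->|l0]; first by apply: base0.
  case: (l =P 1) => [->|l1] //; by apply: base1.
case: (l =P 0) => [->|l0]; first by apply: base0.
case: (l =P 1) => [->|l1]; first by apply: base1.
move/bigUP=> [s _] /ocatP [u [v [-> [h1 h2]]]].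
have [s1 r1] := IH _ _ _ _ h1; have [s2 r2] := IH _ _ _ _ h2.
rewrite size_cat s1 s2 runs_cat; split; first lia.
by apply/existsP; exists s; rewrite r1 r2.
Qed.

Lemma E_complete d l p q w :
  (exists u, runs delta q0 u p) -> l <= expn 2 d -> size w = l -> runs delta p w q ->
  omatch (E d l p q) w.
Proof.
elim: d l p q w => [|d IH] l p q w [u0 hu0] hl hw hr /=.
- case: (l =P 0) => [l0|ln0].
    by move: hw hr; rewrite l0; case: w => //= _ /eqP ->; rewrite eqxx.
  have l1 : l = 1 by move: hl; rewrite ?expn0; lia.
  rewrite l1 /=; move: hw hr; rewrite l1; case: w => [|a [|]] //= _.
  move=> /existsP [r /andP [hd /eqP hrq]]; rewrite hrq in hd.
  by apply/bigUP; exists a; rewrite // mem_enum.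
- case: (l =P 0) => [l0|ln0].
    by move: hw hr; rewrite l0; case: w => //= _ /eqP ->; rewrite eqxx.
  case: (l =P 1) => [l1|ln1].
    move: hw hr; rewrite l1; case: w => [|a [|]] //= _.
    move=> /existsP [r /andP [hd /eqP hrq]]; rewrite hrq in hd.
    by apply/bigUP; exists a; rewrite // mem_enum.
  have := cat_take_drop l./2 w => hwe.
  move: hr; rewrite -hwe runs_cat => /existsP [s /andP [h1 h2]].
  have hs : nat_of_ord (lay s) = size (u0 ++ take l./2 w).
    by apply: Hlay; rewrite runs_cat; apply/existsP; exists p; rewrite hu0 h1.
  have hp : nat_of_ord (lay p) = size u0 by apply: Hlay.
  have st : size (take l./2 w) = l./2 by rewrite size_take hw; case: ltnP => //; lia.
  have sd : size (drop l./2 w) = l - l./2 by rewrite size_drop hw.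
  apply/bigUP; exists s.
    by rewrite mem_enum; apply/eqP; rewrite /= hs hp size_cat st.
  apply/ocatP; exists (take l./2 w), (drop l./2 w); split; first by rewrite cat_take_drop. split.
    apply: IH => //; first by exists u0.
      by rewrite expnS in hl; lia.
  apply: IH => //; first by exists (u0 ++ take l./2 w); rewrite runs_cat;
     apply/existsP; exists p; rewrite hu0 h1.
  by rewrite expnS in hl; lia.
Qed.

Hypothesis Hk : 0 < k.
Variable om : nat.
Hypothesis Hom : 0 < om.
Hypothesis Hw : forall j, #|[pred s | val (lay s) == j]| <= om.

Lemma lett_size p q :
  osize (bigU (enum [pred a | delta p a q]) (fun a => Some (RLet a))) <= 2 * k.
Proof.
apply: leq_trans (bigU_size (M := 1) _) _ => // .
rewrite -cardE; have := max_card [pred a | delta p a q]; rewrite card_ord; lia.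
Qed.

Lemma E_size d l p q : osize (E d l p q) + 2 <= (2 * k + 2) * expn (2 * om) d.
Proof.
have base : forall d, 2 * k + 2 <= (2 * k + 2) * expn (2 * om) d.
  by move=> d'; rewrite -{1}[2 * k + 2]muln1 leq_mul2l expn_gt0; apply/orP; right; lia.
elim: d l p q => [|d IH] l p q /=.
- case: eqP => _; first by (case: eqP => _ /=); have := base 0; lia.
  case: eqP => _ /=; last by have := base 0; lia.
  by apply: leq_trans (leq_add (lett_size p q) (leqnn 2)) _.
- case: eqP => _; first by (case: eqP => _ /=); have := base d.+1; lia.
  case: eqP => _.
    by apply: leq_trans (leq_add (lett_size p q) (leqnn 2)) _.
  set B := (2 * k + 2) * expn (2 * om) d.
  have HB : 2 <= B by have := base d; lia.
  have := bigU_size (M := (2 * B - 3))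
    (l := enum [pred s | val (lay s) == val (lay p) + l./2])
    (g := fun s => ocat (E d l./2 p s) (E d (l - l./2) s q)).
  rewrite -cardE.
  have hc := Hw (val (lay p) + l./2).
  have -> : (2 * B - 3).+1 = 2 * B - 2 by lia.
  move=> H.
  have H' : osize (bigU (enum [pred s | val (lay s) == val (lay p) + l./2])
        (fun s => ocat (E d l./2 p s) (E d (l - l./2) s q))) <=
         #|[pred s | val (lay s) == val (lay p) + l./2]| * (2 * B - 2).
    apply: H => s _.
    have := ocat_size (E d l./2 p s) (E d (l - l./2) s q).
    have := IH l./2 p s; have := IH (l - l./2) s q; rewrite -/B; lia.
  rewrite expnS mulnCA -/B.
  have : #|[pred s | val (lay s) == val (lay p) + l./2]| * (2 * B - 2) <= om * (2 * B - 2).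
    by rewrite leq_mul2r hc orbT.
  move=> hh; apply: leq_trans (leq_add H' (leqnn 2)) _.
  nia.
Qed.

End Reg.

Arguments bigU {k T}.
Arguments omatch {k}.
Arguments osize {k}.
Arguments bigU_size {k T l g M}.
Arguments E {k Q} delta {n} lay.

Lemma INR_expn (a t : nat) : INR (expn a t) = (INR a ^ t)%R.
Proof.
elim: t => [|t IH]; first by rewrite expn0.
by rewrite expnS mult_INR IH /=.
Qed.

Lemma ln_le' (x y : R) : (0 < x)%R -> (x <= y)%R -> (ln x <= ln y)%R.
Proof.
move=> hx [h|->]; last by apply: Rle_refl.
by apply: Rlt_le; apply: ln_increasing.
Qed.

Lemma real_part (f k n om t m : nat) :
  0 < om -> 0 < n -> expn 2 t <= n -> m <= 8 * (f * k * n * om) * expn om t ->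
  (INR m <= 8 * rpn_bound f k n om)%R.
Proof.
move=> hom hn ht hm.
have hom' : (1 <= INR om)%R by apply: (le_INR 1); apply/leP.
have hn' : (0 < INR n)%R by apply: (lt_INR 0); apply/ltP.
have ln2 : (0 < ln 2)%R by rewrite -ln_1; apply: ln_increasing; lra.
have h2t : (2 ^ t <= INR n)%R.
  have -> : (2 = INR 2)%R by simpl; lra.
  by rewrite -INR_expn; apply: le_INR; apply/leP.
have htr : (INR t <= ln (INR n) / ln 2)%R.
  have e : (ln (2 ^ t) = INR t * ln 2)%R by apply: ln_pow; lra.
  have : (ln (2 ^ t) <= ln (INR n))%R by apply: ln_le' => //; apply: pow_lt; lra.
  rewrite e => hh.
  apply (Rmult_le_reg_r (ln 2)); first exact ln2.
  unfold Rdiv; rewrite Rmult_assoc Rinv_l; lra.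
have hp : (INR om ^ t <= Rpower (INR om) (ln (INR n) / ln 2))%R.
  by rewrite -Rpower_pow; [apply: Rle_Rpower|lra].
apply: Rle_trans (le_INR _ _ (elimT leP hm)) _.
rewrite /rpn_bound !mult_INR INR_expn.
have h0 : (0 <= INR f * INR k * INR n * INR om)%R.
  by rewrite -!mult_INR; apply: pos_INR.
have : (0 <= INR om ^ t)%R by apply: pow_le; lra.
move: h0; set X := (INR f * INR k * INR n * INR om)%R => h0 h1.
have -> : INR 8 = 8%R by simpl; lra.
have := Rmult_le_compat_l X _ _ h0 hp; nra.
Qed.

Theorem proposition3p2 :
  exists C : R,
  forall (k : nat) (Q : finType) (q0 : Q) (delta : Q -> 'I_k -> Q -> bool)
         (F : {set Q}) (n : nat) (lay : Q -> 'I_n.+1),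
    0 < k ->
    0 < n ->
    (exists w, accepts delta q0 F w) ->
    longest_path_length delta q0 n ->
    layered_by delta q0 lay ->
    exists r : regex k,
      (forall w, matches r w <-> accepts delta q0 F w) /\
      (INR (rpn r) <= C * rpn_bound #|F| k n (width lay))%R.
Proof.
exists 8%R => k Q q0 delta F n lay hk hn [w0 hw0] _ hlay.
set om := width lay.
have Hw : forall j, #|[pred s | val (lay s) == j]| <= om.
  move=> j; case: (ltnP j n.+1) => hj.
    have -> : #|[pred s | val (lay s) == j]| = #|[set q | lay q == Ordinal hj]|.
      by apply: eq_card => s; rewrite !inE.
    rewrite /om /width; exact: (leq_bigmax (F := fun j0 : 'I_n.+1 => #|[set q | lay q == j0]|) (Ordinal hj)).
  rewrite (eq_card0 (A := [pred s | val (lay s) == j])) // => s /=.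
  by apply/negbTE; rewrite neq_ltn; apply/orP; left; exact: leq_trans (ltn_ord _) hj.
have Hom : 0 < om.
  apply: leq_trans (Hw (val (lay q0))); apply/card_gt0P; exists q0; exact: eqxx.
set t := trunc_log 2 n.
have ht1 : expn 2 t <= n by apply: trunc_logP.
have ht2 : n < expn 2 t.+1 by apply: trunc_log_ltn.
set d := t.+1.
set R := bigU (enum F) (fun q => E delta lay d (val (lay q)) q0 q).
have HR : forall w, omatch R w <-> accepts delta q0 F w.
  move=> w; rewrite /R bigUP; split.
    move=> [q]; rewrite mem_enum => hq /E_sound [_ hr].
    by apply/existsP; exists q; rewrite hq hr.
  move=> /existsP [q /andP [hq hr]]; exists q; first by rewrite mem_enum.
  change (omatch (E delta lay d (val (lay q)) q0 q) w).
  apply: (@E_complete k Q delta q0 n lay hlay d (val (lay q)) q0 q w).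
  - by exists [::]; exact: eqxx.
  - apply: leq_trans _ (ltnW ht2); rewrite -ltnS; exact: ltn_ord.
  - by rewrite -(hlay _ _ hr).
  - exact: hr.
have hsz : osize R <= #|F| * ((2 * k + 2) * expn (2 * om) d - 1).
  rewrite cardE; apply: leq_trans (bigU_size (M := (2 * k + 2) * expn (2 * om) d - 2) _) _.
    move=> q _; have := @E_size k Q delta n lay hk om Hom Hw d (val (lay q)) q0 q; lia.
  apply: leq_mul => //.
  have : 2 <= (2 * k + 2) * expn (2 * om) d.
    by rewrite -[2]muln1 leq_mul //; [lia|rewrite expn_gt0; lia].
  lia.
move: HR hsz; case: R => [r|] HR hsz; last first.
  by have := proj2 (HR w0) hw0.
exists r; split; first exact: HR.
apply: (real_part _ _ _ _ t) => //.
apply: leq_trans hsz _.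
rewrite /d expnMn !expnS.
have : 2 * k + 2 <= 4 * k by lia.
have : 2 * expn 2 t <= 2 * n by lia.
move: (expn 2 t) (expn om t) => a b h1 h2.
have h3 : (2*k+2)*(2*a*(om*b)) <= 4*k*(2*n*(om*b)).
  by apply: leq_mul => //; apply: leq_mul.
have h4 : #|F| * ((2 * k + 2) * (2 * a * (om * b)) - 1) <= #|F| * (4*k*(2*n*(om*b))).
  by apply: leq_mul => //; apply: leq_trans (leq_subr 1 _) h3.
apply: leq_trans h4 _.
nia.
Qed.
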